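(* Let $p\ge4$. There is a constant $c_p>0$ such that the following holds. Let $n_1,\dots,n_p\in\mathbb{Z}\setminus\{0\}$ with $|n_1|\ge|n_2|\ge\cdots\ge|n_p|$ and set $n=n_1+\cdots+n_p$. Then at least one of the following is true: (I) (resonance) $n_i=n$ for some $1\le i\le p$; (II) $n_1+n_2=0$; (III) $|n_3|\ge c_p|n_1|$; (IV) $|\Phi_p(n_1,\dots,n_p)|=|n^5-n_1^5-\cdots-n_p^5|\ge c_p\,n_1^4$; (V) $n_3^4|n_4|\ge c_p\,n_1^4$.
   Context: $\Phi_p(n_1,\dots,n_p)=n^5-\sum_{i=1}^pn_i^5$ where $n=\sum_{i=1}^pn_i$. The paper writes (III)–(V) with $\gtrsim$, i.e. up to an implicit constant; condition (II) is written as $n_1^*+n_2^*=0$, meaning the two frequencies of largest absolute value sum to zero, which under the stated ordering is $n_1+n_2=0$. *)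

(* Defs.v *)
(* Frequencies n_1..n_p are the entries s`_0 .. s`_(p-1)
   of a sequence s : seq int of size p (0-based indexing). *)
From HB Require Import structures.
From mathcomp Require Import all_boot all_order all_algebra.
From mathcomp Require Import reals.
Set Implicit Arguments. Unset Strict Implicit. Unset Printing Implicit Defensive.
Import Order.TTheory GRing.Theory Num.Theory.
Local Open Scope ring_scope.

Definition freq_sum (s : seq int) : int := \sum_(x <- s) x.

Definition Phi (s : seq int) : int := (freq_sum s) ^+ 5 - \sum_(x <- s) x ^+ 5.

(* Main.v *)
Require Import Defs.
From HB Require Import structures.
From mathcomp Require Import all_boot all_order all_algebra.
From mathcomp Require Import reals.
From mathcomp Require Import lra ring.
Import Order.TTheory GRing.Theory Num.Theory.
Local Open Scope ring_scope.

Ltac pos := repeat first [ done | apply: ler01 | apply: ler0n | rewrite invr_ge0 | apply: mulr_ge0 | apply: divr_ge0 | apply: exprn_ge0 | apply: normr_ge0 | apply: addr_ge0 | lra ].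

Section H.
Variable F : realFieldType.
Implicit Types x y z w B : F.

Lemma pow_le x y n : 0 <= x -> x <= y -> x ^+ n <= y ^+ n.
Proof.
move=> h0 h1; apply: lerXn2r => //; rewrite nnegrE //; exact: le_trans h1.
Qed.

Lemma tri2 x y : `|x| - `|y| <= `|x + y|.
Proof. have := lerB_normD x y. by []. Qed.

Lemma trim x y : `|x| - `|y| <= `|x - y|.
Proof. exact: lerB_dist. Qed.

Lemma diff5' (f r B : F) : `|f + r| <= B -> `|f| <= B ->
  `|(f + r) ^+ 5 - f ^+ 5| <= 5 * `|r| * B ^+ 4.
Proof.
move=> hg hf.
have e : (f + r) ^+ 5 - f ^+ 5 = r * ((f + r) ^+ 4 + (f + r) ^+ 3 * f
   + (f + r) ^+ 2 * f ^+ 2 + (f + r) * f ^+ 3 + f ^+ 4) by ring.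
have -> : 5 * `|r| * B ^+ 4 = `|r| * (5 * B ^+ 4) by ring.
rewrite e normrM; apply: (ler_wpM2l (normr_ge0 r)).
have hB : 0 <= B by exact: le_trans hf.
have k : forall i j, (i + j = 4)%N -> `|(f + r) ^+ i * f ^+ j| <= B ^+ 4.
  move=> i j hij; rewrite normrM !normrX -hij exprD.
  by apply: ler_pM; rewrite ?exprn_ge0 //; apply: pow_le.
apply: le_trans (ler_normD _ _) _.
have -> : 5 * B ^+ 4 = B^+4 + B^+4 + B^+4 + B^+4 + B^+4 by ring.
apply: lerD; last by have := k 0%N 4%N erefl; rewrite expr0 mul1r.
apply: le_trans (ler_normD _ _) _; apply: lerD; last by have := k 1%N 3%N erefl; rewrite expr1.
apply: le_trans (ler_normD _ _) _; apply: lerD; last exact: (k 2%N 2%N).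
apply: le_trans (ler_normD _ _) _; apply: lerD; last by have := k 3%N 1%N erefl; rewrite expr1.
by have := k 4%N 0%N erefl; rewrite expr0 mulr1.
Qed.

Lemma diff5 (f r : F) : `|(f + r) ^+ 5 - f ^+ 5| <= 5 * `|r| * (`|f| + `|r|) ^+ 4.
Proof. apply: diff5'; [exact: ler_normD | by rewrite lerDl]. Qed.


Lemma sqn (x : F) : x ^+ 2 = `|x| ^+ 2.
Proof. by rewrite real_normK ?num_real. Qed.

Lemma qlow (x y : F) : `|x| ^+ 2 / 2 <= x ^+ 2 + x * y + y ^+ 2.
Proof. rewrite -sqn. nra. Qed.

Lemma LA_M (a b : F) : `|a| <= 4 * `|b| ->
  5 / 8 * `|a| ^+ 4 * `|a + b| <= `|5 * a * b * (a + b) * (a ^+ 2 + a * b + b ^+ 2)|.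
Proof.
move=> h.
have hq := qlow a b.
have hq0 : 0 <= a ^+ 2 + a * b + b ^+ 2 by apply: le_trans hq; rewrite divr_ge0 // exprn_ge0.
rewrite !normrM (ger0_norm hq0) (ger0_norm (_ : 0 <= 5)) //.
have h1 : `|a| * (`|a| / 4) <= `|a| * `|b| by apply: ler_wpM2l => //; lra.
have h2 : `|a| * (`|a| / 4) * (`|a| ^+ 2 / 2) <= `|a| * `|b| * (a ^+ 2 + a * b + b ^+ 2).
  apply: ler_pM => //.
all: pos.
have h3 := ler_wpM2l (normr_ge0 (a + b)) h2.
have h4 := ler_wpM2l (_ : 0 <= 5) h3.
have h5 := h4 (ler0n _ 5).
lra.
Qed.

Lemma lepM {x1 y1 x2 y2 : F} : 0 <= x1 -> 0 <= x2 -> x1 <= y1 -> x2 <= y2 -> x1 * x2 <= y1 * y2.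
Proof. exact: ler_pM. Qed.

Lemma norm3 (x y z : F) : `|x + y + z| <= `|x| + `|y| + `|z|.
Proof. apply: le_trans (ler_normD _ _) _; apply: lerD => //; exact: ler_normD. Qed.

Lemma LA_H1 (a b t K : F) : `|b| <= `|a| -> `|t| <= `|a| -> 0 <= K -> K * `|t| <= `|a| ->
  K * `|5 * (a + b) * t * (a + b + t) * ((a + b) ^+ 2 + (a + b) * t + t ^+ 2)|
   <= 105 * `|a + b| * `|a| ^+ 4.
Proof.
move=> hb ht hK hKt.
have hd : `|a + b| <= 2 * `|a| by apply: le_trans (ler_normD _ _) _; lra.
have hf : `|a + b + t| <= 3 * `|a| by apply: le_trans (ler_normD _ _) _; lra.
have hg : `|(a + b) ^+ 2 + (a + b) * t + t ^+ 2| <= 7 * `|a| ^+ 2.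
  apply: le_trans (norm3 _ _ _) _; rewrite !normrX normrM.
  have h1 := lepM (normr_ge0 _) (normr_ge0 _) hd hd.
  have h2 := lepM (normr_ge0 _) (normr_ge0 _) hd ht.
  have h3 := lepM (normr_ge0 _) (normr_ge0 _) ht ht.
  rewrite !expr2; lra.
rewrite !normrM (ger0_norm (ler0n _ 5)).
have k1 := lepM (mulr_ge0 hK (normr_ge0 _)) (normr_ge0 _) hKt hf.
have k2 := lepM (mulr_ge0 (mulr_ge0 hK (normr_ge0 _)) (normr_ge0 _)) (normr_ge0 _) k1 hg.
have k3 := ler_wpM2l (mulr_ge0 (ler0n _ 5) (normr_ge0 (a + b))) k2.
rewrite !exprS expr0 in k3 *. lra.
Qed.

Lemma LA_H2 (a d t u r m K : F) : `|d| <= 2 * `|a| -> `|u| <= `|t| -> `|r| <= m * `|u| ->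
  0 <= m -> 0 <= K -> K * `|t| <= `|a| -> K * (`|t| ^+ 4 * `|u|) <= `|a| ^+ 4 ->
  K * `|(d + t + r) ^+ 5 - (d + t) ^+ 5| <=
    640 * m * `|d| * `|a| ^+ 4 + 80 * m * (m + 1) ^+ 4 * `|a| ^+ 4.
Proof.
move=> hd hu hr hm hK hKt hKtu.
have hmu : m * `|u| <= m * `|t| by apply: ler_wpM2l.
have hB1 : `|d + t + r| <= `|d| + (m + 1) * `|t|.
  apply: le_trans (norm3 _ _ _) _; lra.
have hB2 : `|d + t| <= `|d| + (m + 1) * `|t|.
  apply: le_trans (ler_normD _ _) _.
  have : 0 <= m * `|t| by pos. lra.
have hB0 : 0 <= `|d| + (m + 1) * `|t| by pos.
have h5 := @diff5' _ _ _ hB1 hB2.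
set B := `|d| + (m + 1) * `|t| in hB0 h5 *.
have hB4 : 0 <= B ^+ 4 by pos.
have hKB : 0 <= K * B ^+ 4 by pos.
have hr' := ler_wpM2r hKB hr.
have hKu : K * `|u| <= `|a|.
  apply: le_trans hKt; exact: ler_wpM2l.
have g1 : 0 <= 640 * m * `|d| * `|a| ^+ 4 by pos.
have g2 : 0 <= 80 * m * (m + 1) ^+ 4 * `|a| ^+ 4 by pos.
have k1 := ler_wpM2l hK h5.
have [hc|hc] := lerP ((m + 1) * `|t|) `|d|.
- have e1 : B ^+ 4 <= (2 * `|d|) ^+ 4 by apply: pow_le => //; rewrite /B; lra.
  have e2 : `|d| ^+ 3 <= (2 * `|a|) ^+ 3 by apply: pow_le.
  have e3 : B ^+ 4 <= 128 * `|d| * `|a| ^+ 3.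
    have h0 : 0 <= 16 * `|d| by pos.
    have h := ler_wpM2l h0 e2.
    rewrite !exprS !expr0 in e1 h *. lra.
  have e4 := lepM (mulr_ge0 hK (normr_ge0 _)) hB4 hKu e3.
  have h0 : 0 <= 5 * m by pos.
  have e6 := ler_wpM2l h0 e4.
  rewrite !exprS !expr0 in k1 hr' e6 g1 g2 *.
  lra.
- have e1 : B ^+ 4 <= (2 * ((m + 1) * `|t|)) ^+ 4 by apply: pow_le => //; rewrite /B; lra.
  have e2 : K * `|u| * B ^+ 4 <= 16 * (m + 1) ^+ 4 * `|a| ^+ 4.
    have h0 : 0 <= K * `|u| by pos.
    have ha := ler_wpM2l h0 e1.
    have h0' : 0 <= 16 * (m + 1) ^+ 4 by pos.
    have hb := ler_wpM2l h0' hKtu.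
    rewrite !exprS !expr0 in ha hb *. lra.
  have h0 : 0 <= 5 * m by pos.
  have e6 := ler_wpM2l h0 e2.
  rewrite !exprS !expr0 in k1 hr' e6 g1 g2 *.
  lra.
Qed.

Lemma LB_main (a S : F) : `|S| <= `|a| / 2 ->
  5 / 4 * `|a| ^+ 4 * `|S| <= `|5 * a * S * (a + S) * (a ^+ 2 + a * S + S ^+ 2)|.
Proof.
move=> h.
have hq := qlow a S.
have hq0 : 0 <= a ^+ 2 + a * S + S ^+ 2 by apply: le_trans hq; pos.
have haS : `|a| / 2 <= `|a + S| by have := lerB_normD a S; lra.
rewrite !normrM (ger0_norm hq0) (ger0_norm (ler0n _ 5)).
have h1 := lepM (mulr_ge0 (normr_ge0 a) (normr_ge0 S)) (_ : 0 <= `|a| / 2) (lexx (`|a| * `|S|)) haS.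
have h0 : 0 <= `|a| / 2 by pos.
have h2 := h1 h0.
have h3 := lepM (_ : 0 <= `|a| * `|S| * (`|a| / 2)) (_ : 0 <= `|a| ^+ 2 / 2) h2 hq.
have h0' : 0 <= `|a| * `|S| * (`|a| / 2) by pos.
have h0'' : 0 <= `|a| ^+ 2 / 2 by pos.
have h4 := h3 h0' h0''.
rewrite !exprS !expr0 in h4 *. lra.
Qed.

Lemma LB_S5 (a S : F) : `|S| <= `|a| / 2 -> `|S ^+ 5| <= `|a| ^+ 4 * `|S| / 16.
Proof.
move=> h; rewrite normrX.
have h1 : `|S| ^+ 4 <= (`|a| / 2) ^+ 4 by apply: pow_le.
have h2 := ler_wpM2r (normr_ge0 S) h1.
rewrite !exprS !expr0 in h2 *. lra.
Qed.

Lemma mono4 (b t : F) i j : `|t| <= `|b| -> (i + j = 4)%N -> `|b ^+ i * t ^+ j| <= `|b| ^+ 4.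
Proof.
move=> h hij; rewrite normrM !normrX -hij exprD.
apply: ler_wpM2l; first by pos.
by apply: pow_le.
Qed.

Lemma LB_Q (b t : F) : `|t| <= `|b| ->
  `|b ^+ 4 - b ^+ 3 * t + b ^+ 2 * t ^+ 2 - b * t ^+ 3 + t ^+ 4| <= 5 * `|b| ^+ 4.
Proof.
move=> h.
have k1 := @mono4 b t 4 0 h erefl.
have k2 := @mono4 b t 3 1 h erefl.
have k3 := @mono4 b t 2 2 h erefl.
have k4 := @mono4 b t 1 3 h erefl.
have k5 := @mono4 b t 0 4 h erefl.
rewrite expr0 mulr1 in k1; rewrite expr1 in k2 k4; rewrite expr0 mul1r in k5.
apply: le_trans (ler_normD _ _) _.
apply: le_trans (lerD (ler_normD _ _) (lexx _)) _.
apply: le_trans (lerD (lerD (ler_normD _ _) (lexx _)) (lexx _)) _.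
apply: le_trans (lerD (lerD (lerD (ler_normD _ _) (lexx _)) (lexx _)) (lexx _)) _.
rewrite !normrN. lra.
Qed.

Lemma LB_eQ (a b t u r m K : F) : 4 * `|b| <= `|a| -> `|t| <= `|b| -> `|u| <= `|t| ->
  `|r| <= m * `|u| -> 0 <= m -> 0 <= K -> K * (`|t| ^+ 4 * `|u|) <= `|a| ^+ 4 ->
  K * `|(b + t) * (b ^+ 4 - b ^+ 3 * t + b ^+ 2 * t ^+ 2 - b * t ^+ 3 + t ^+ 4)|
   <= K * (10 / 256) * `|a| ^+ 4 * `|b + t + r| + 5 * m * (2 * m + 1) ^+ 4 * `|a| ^+ 4.
Proof.
move=> hb ht hu hr hm hK hKtu.
set Q := _ - _ + _ - _ + _.
have hQ : `|Q| <= 5 * `|b| ^+ 4 by exact: LB_Q.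
have hb4 : `|b| ^+ 4 <= (`|a| / 4) ^+ 4 by apply: pow_le => //; lra.
have hb4' : `|b| ^+ 4 <= `|a| ^+ 4 / 256 by rewrite !exprS !expr0 in hb4 *; lra.
have hQ' : `|Q| <= 5 * (`|a| ^+ 4 / 256) by lra.
have hS0 : 0 <= `|b + t + r| by pos.
have g1 : 0 <= K * (10 / 256) * `|a| ^+ 4 * `|b + t + r| by pos.
have g2 : 0 <= 5 * m * (2 * m + 1) ^+ 4 * `|a| ^+ 4 by pos.
rewrite normrM.
have [hc|hc] := lerP `|b| ((2 * m + 1) * `|t|).
- have e1 : `|b| ^+ 4 <= ((2 * m + 1) * `|t|) ^+ 4 by apply: pow_le.
  have he : `|b + t| <= `|b + t + r| + m * `|u|.
    have := ler_normD (b + t + r) (- r); rewrite normrN addrK; lra.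
  have k1 := lepM (normr_ge0 _) (normr_ge0 _) he (lexx `|Q|).
  have k2 := ler_wpM2l hS0 hQ'.
  have k3 : m * `|u| * `|Q| <= m * `|u| * (5 * ((2 * m + 1) * `|t|) ^+ 4).
    apply: ler_wpM2l; first by pos. lra.
  have k4 := ler_wpM2l hK k1.
  have k5 := ler_wpM2l hK k2.
  have k6 := ler_wpM2l hK k3.
  have h0 : 0 <= 5 * m * (2 * m + 1) ^+ 4 by pos.
  have k7 := ler_wpM2l h0 hKtu.
  have g3 : 0 <= K * `|a| ^+ 4 * `|b + t + r| by pos.
  rewrite exprMn in k6.
  move: k4 k5 k6 k7 g3; clear; move=> k4 k5 k6 k7 g3.
  lra.
- have hr2 : m * `|u| <= m * `|t| by apply: ler_wpM2l.
  have hbt := lerB_normD b t.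
  have hS : `|b + t| <= 2 * `|b + t + r|.
    have := lerB_normD (b + t) r. lra.
  have k1 := lepM (normr_ge0 _) (normr_ge0 _) hS hQ'.
  have k4 := ler_wpM2l hK k1.
  move: k4 g2; clear; move=> k4 g2.
  lra.
Qed.

End H.

Section C.
Variable F : realFieldType.
Lemma tri4 (x y z w : F) : `|x| - `|y| - `|z| - `|w| <= `|x + y + z + w|.
Proof.
have e : x = (x + y + z + w) + (- y) + (- z) + (- w) by ring.
have h : `|x| <= `|x + y + z + w| + `|y| + `|z| + `|w|.
  rewrite {1}e; apply: le_trans (ler_normD _ _) _; rewrite normrN.
  apply: lerD => //; apply: le_trans (ler_normD _ _) _; rewrite normrN.
  apply: lerD => //; apply: le_trans (ler_normD _ _) _; rewrite normrN //.
lra.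
Qed.

Lemma coefA {m Y D K : F} : 1 <= m -> 16 <= Y -> K = 1000 * (m + 1) * Y -> 1 <= D ->
  1 <= D * (5 / 8 * K - 105 - 640 * m) - 80 * m * Y - m.
Proof.
move=> hm hY eK hD.
have hh : 0 <= m * (Y - 16) by apply: mulr_ge0; lra.
have c1 : 0 <= 5 / 8 * K - 105 - 640 * m by rewrite eK; nra.
have c2 := ler_wpM2r c1 hD. rewrite mul1r in c2.
rewrite eK in c1 c2 *. lra.
Qed.

Lemma coefB {m Y Z K S : F} : 1 <= m -> 16 <= Y -> K = 1000 * (m + 1) * Y -> 1 <= S ->
  Z <= 16 * Y -> 1 <= K * S * (5 / 4 - 1 / 16 - 10 / 256) - 5 * m * Z - m.
Proof.
move=> hm hY eK hS hZ.
have hK : 0 <= K by rewrite eK; apply: mulr_ge0; [apply: mulr_ge0|]; lra.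
have hKS := ler_wpM2l hK hS. rewrite mulr1 in hKS.
have hh : 0 <= m * (Y - 16) by apply: mulr_ge0; lra.
have hh2 : 0 <= m * (16 * Y - Z) by apply: mulr_ge0; lra.
rewrite eK in hKS *. nra.
Qed.

Lemma core (a b t u r E m K : F) : 1 <= m -> K = 1000 * (m + 1) ^+ 5 ->
  `|b| <= `|a| -> `|t| <= `|b| -> `|u| <= `|t| -> `|r| <= m * `|u| ->
  `|E| <= m * `|u| ^+ 5 ->
  1 <= `|a + b| -> 1 <= `|b + t + r| ->
  K * `|t| < `|a| -> K * (`|t| ^+ 4 * `|u|) < `|a| ^+ 4 ->
  `|a| ^+ 4 <= K * `|(a + b + t + r) ^+ 5 - a ^+ 5 - b ^+ 5 - t ^+ 5 - E|.
Proof.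
move=> hm eK hb ht hu hr hE hd hS hKt hKtu.
have hm0 : 0 <= m by lra.
have hY : 16 <= (m + 1) ^+ 4.
  have := @pow_le _ 2 (m + 1) 4 (ler0n _ 2) (_ : 2 <= m + 1).
  rewrite !exprS !expr0 => h; have := h (_ : 2 <= m + 1); lra.
have eK' : K = 1000 * (m + 1) * (m + 1) ^+ 4 by rewrite eK exprS mulrA.
have hK : 0 <= K by rewrite eK'; pos.
have hKt' := ltW hKt.
have hKtu' := ltW hKtu.
have hX : 0 <= `|a| ^+ 4 by pos.
have hEK : K * `|E| <= m * `|a| ^+ 4.
  have h1 : `|u| ^+ 4 <= `|t| ^+ 4 by apply: pow_le.
  have h2 := ler_wpM2r (normr_ge0 u) h1.
  have h3 : `|E| <= m * (`|t| ^+ 4 * `|u|).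
    apply: le_trans hE _; apply: ler_wpM2l => //; rewrite exprS mulrC; exact: h2.
  have h4 := ler_wpM2l hK h3.
  have h5 := ler_wpM2l hm0 hKtu'.
  lra.
have [hc|hc] := lerP `|a| (4 * `|b|).
-
  have eqA : (a + b + t + r) ^+ 5 - a ^+ 5 - b ^+ 5 - t ^+ 5 - E =
    5 * a * b * (a + b) * (a ^+ 2 + a * b + b ^+ 2)
    + 5 * (a + b) * t * (a + b + t) * ((a + b) ^+ 2 + (a + b) * t + t ^+ 2)
    + ((a + b + t + r) ^+ 5 - (a + b + t) ^+ 5) + (- E) by ring.
  rewrite eqA.
  have tr := tri4 (5 * a * b * (a + b) * (a ^+ 2 + a * b + b ^+ 2))
    (5 * (a + b) * t * (a + b + t) * ((a + b) ^+ 2 + (a + b) * t + t ^+ 2))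
    ((a + b + t + r) ^+ 5 - (a + b + t) ^+ 5) (- E).
  rewrite normrN in tr.
  have trK := ler_wpM2l hK tr.
  have hM := @LA_M _ a b hc.
  have hMK := ler_wpM2l hK hM.
  have hH1 := @LA_H1 _ a b t K hb (le_trans ht hb) hK hKt'.
  have hd2 : `|a + b| <= 2 * `|a| by apply: le_trans (ler_normD _ _) _; lra.
  have hH2 := @LA_H2 _ a (a + b) t u r m K hd2 hu hr hm0 hK hKt' hKtu'.
  have cf := coefA hm hY eK' hd.
  have cX := ler_wpM2l hX cf.
  rewrite mulr1 in cX.
  move: trK hMK hH1 hH2 hEK cX.
  move: ((m + 1) ^+ 4) (`|a| ^+ 4) => Y X.
  move: (`|a + b|) => D.
  move: (`|5 * a * b * (a + b) * (a ^+ 2 + a * b + b ^+ 2)|) => M.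
  move: (`|5 * (a + b) * t * (a + b + t) * ((a + b) ^+ 2 + (a + b) * t + t ^+ 2)|) => H1.
  move: (`|(a + b + t + r) ^+ 5 - (a + b + t) ^+ 5|) => H2.
  move: (`|_ + _ + _ - E|) => P.
  move: `|E| => EE.
  clear. move=> trK hMK hH1 hH2 hEK cX.
  lra.
-
  have hb4 : 4 * `|b| <= `|a| by apply: ltW.
  have h4m : 4 * (m + 1) <= K.
    rewrite eK'; have : 0 <= (m + 1) * ((m + 1) ^+ 4 - 16) by apply: mulr_ge0; lra.
    move=> hh; nra.
  have hmu : m * `|u| <= m * `|t| by apply: ler_wpM2l.
  have hmt : 4 * (m + 1) * `|t| <= `|a|.
    apply: le_trans _ hKt'; apply: ler_wpM2r => //.
  have hSa : `|b + t + r| <= `|a| / 2.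
    apply: le_trans (norm3 _ _ _ _) _; lra.
  have eqB : (a + b + t + r) ^+ 5 - a ^+ 5 - b ^+ 5 - t ^+ 5 - E =
    5 * a * (b + t + r) * (a + (b + t + r)) * (a ^+ 2 + a * (b + t + r) + (b + t + r) ^+ 2)
    + (b + t + r) ^+ 5
    + (- ((b + t) * (b ^+ 4 - b ^+ 3 * t + b ^+ 2 * t ^+ 2 - b * t ^+ 3 + t ^+ 4)))
    + (- E) by ring.
  rewrite eqB.
  have tr := tri4 (5 * a * (b + t + r) * (a + (b + t + r)) * (a ^+ 2 + a * (b + t + r) + (b + t + r) ^+ 2))
    ((b + t + r) ^+ 5)
    (- ((b + t) * (b ^+ 4 - b ^+ 3 * t + b ^+ 2 * t ^+ 2 - b * t ^+ 3 + t ^+ 4)))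
    (- E).
  rewrite !normrN in tr.
  have trK := ler_wpM2l hK tr.
  have hmain := @LB_main _ a (b + t + r) hSa.
  have hmainK := ler_wpM2l hK hmain.
  have hS5 := @LB_S5 _ a (b + t + r) hSa.
  have hS5K := ler_wpM2l hK hS5.
  have heQ := @LB_eQ _ a b t u r m K hb4 ht hu hr hm0 hK hKtu'.
  have hZ : (2 * m + 1) ^+ 4 <= 16 * (m + 1) ^+ 4.
    have h1 : 0 <= 2 * m + 1 by lra.
    have h2 : 2 * m + 1 <= 2 * (m + 1) by lra.
    have := @pow_le _ _ _ 4 h1 h2.
    rewrite exprMn => h. apply: le_trans h _. rewrite (_ : 2 ^+ 4 = 16) //. by rewrite !exprS expr0; lra.
  have cf := coefB hm hY eK' hS hZ.
  have cX := ler_wpM2l hX cf.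
  rewrite mulr1 in cX.
  move: trK hmainK hS5K heQ hEK cX.
  move: ((m + 1) ^+ 4) ((2 * m + 1) ^+ 4) (`|a| ^+ 4) => Y Z X.
  move: (`|b + t + r|) => S.
  move: (`|5 * a * (b + t + r) * (a + (b + t + r)) * (a ^+ 2 + a * (b + t + r) + (b + t + r) ^+ 2)|) => M.
  move: (`|(b + t + r) ^+ 5|) => S5.
  move: (`|(b + t) * (b ^+ 4 - b ^+ 3 * t + b ^+ 2 * t ^+ 2 - b * t ^+ 3 + t ^+ 4)|) => EQ.
  move: (`|_ + _ + _ + - E|) => P.
  move: `|E| => EE.
  clear. move=> trK hMK hS5K heQ hEK cX.
  lra.
Qed.
End C.

Lemma sum_bound (w : seq int) (B : int) (f : int -> int) :
  (forall x, x \in w -> `|f x| <= B) -> `|\sum_(x <- w) f x| <= (size w)%:R * B.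
Proof.
elim: w => [|x w IH] h; first by rewrite big_nil normr0 mul0r.
rewrite big_cons /=.
apply: le_trans (ler_normD _ _) _.
have h1 := h x (mem_head _ _).
have h2 : `|\sum_(y <- w) f y| <= (size w)%:R * B.
  by apply: IH => y hy; apply: h; rewrite in_cons hy orbT.
rewrite -addn1 natrD mulrDl mul1r addrC; exact: lerD.
Qed.

Lemma intR_le (R : realType) (x y : int) : x <= y -> (x%:~R : R) <= y%:~R.
Proof. by rewrite ler_int. Qed.

Lemma castPhi (R : realType) (a b t r E : int) :
  (((a + b + t + r) ^+ 5 - a ^+ 5 - b ^+ 5 - t ^+ 5 - E)%:~R : R) =
  (a%:~R + b%:~R + t%:~R + r%:~R) ^+ 5 - a%:~R ^+ 5 - b%:~R ^+ 5 - t%:~R ^+ 5 - E%:~R.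
Proof. by rewrite !rmorphB !rmorphXn !rmorphD. Qed.

Lemma norm4 (R : realType) (x : R) : `|x| ^+ 4 = x ^+ 4.
Proof. by rewrite -normrX ger0_norm // (_ : 4 = 2 * 2)%N // exprM sqr_ge0. Qed.

Theorem proposition3p2 (R : realType) (p : nat) (hp : (4 <= p)%N) :
  exists c : R, 0 < c /\
  forall s : seq int,
    size s = p ->
    all (fun x => x != 0) s ->
    (forall i j : nat, (i <= j)%N -> (j < p)%N -> `|s`_j| <= `|s`_i|) ->
    (exists i : nat, (i < p)%N /\ s`_i = freq_sum s) \/
    s`_0 + s`_1 = 0 \/
    c * (`|s`_0|)%:~R <= (`|s`_2|)%:~R \/
    c * (s`_0 ^+ 4)%:~R <= (`|Phi s|)%:~R \/
    c * (s`_0 ^+ 4)%:~R <= (s`_2 ^+ 4 * `|s`_3|)%:~R.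
Proof.
pose m : R := (p - 3)%:R.
pose K : R := 1000 * (m + 1) ^+ 5.
have hm : 1 <= m by rewrite /m ler1n subn_gt0.
have hK : 0 < K by rewrite /K; apply: mulr_gt0 => //; apply: exprn_gt0; lra.
exists K^-1; split; first by rewrite invr_gt0.
move=> s hs hnz hsort.
case: s hs hnz hsort => [|a [|b [|t [|u w]]]] hs hnz hsort; try by move: hp; rewrite -hs.
have epm : (p - 3 = (size w).+1)%N by rewrite -hs /= !subSS subn0.
rewrite /=.
have [h1|h1] := eqVneq (freq_sum [:: a, b, t, u & w]) a.
  by left; exists 0%N; split; [rewrite -hs | rewrite h1].
right.
have [h2|h2] := eqVneq (a + b) 0; first by left.
right.
case: (leP (K^-1 * (`|a|)%:~R) ((`|t|)%:~R : R)) => h3; first by left.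
right.
case: (leP (K^-1 * (a ^+ 4)%:~R) ((`|Phi [:: a, b, t, u & w]|)%:~R : R)) => h4; first by left.
right.
case: (leP (K^-1 * (a ^+ 4)%:~R) ((t ^+ 4 * `|u|)%:~R : R)) => h5; first by [].
exfalso.
have lt4 : forall j, (j < 4)%N -> (j < p)%N by move=> j hj; apply: leq_trans hj hp.
have hba : `|b| <= `|a| := hsort 0%N 1%N isT (lt4 1%N isT).
have htb : `|t| <= `|b| := hsort 1%N 2%N isT (lt4 2%N isT).
have hut : `|u| <= `|t| := hsort 2%N 3%N isT (lt4 3%N isT).
have hw : forall x, x \in w -> `|x| <= `|u|.
  move=> x hx.
  have hj : ((index x w).+4 < p)%N by rewrite -hs /= !ltnS index_mem.
  have := hsort 3%N (index x w).+4 isT hj.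
  by rewrite /= nth_index.
set r0 := u + \sum_(x <- w) x.
set E0 := u ^+ 5 + \sum_(x <- w) x ^+ 5.
have hr0 : `|r0| <= (size w).+1%:R * `|u|.
  rewrite /r0; apply: le_trans (ler_normD _ _) _.
  have := @sum_bound w `|u| id hw.
  rewrite -addn1 natrD mulrDl mul1r addrC => h; exact: lerD.
have hE0 : `|E0| <= (size w).+1%:R * `|u| ^+ 5.
  rewrite /E0; apply: le_trans (ler_normD _ _) _.
  have : forall x, x \in w -> `|x ^+ 5| <= `|u| ^+ 5.
    move=> x hx; rewrite normrX; apply: lerXn2r; rewrite ?nnegrE ?normr_ge0 //; exact: hw.
  move=> hw5.
  have := @sum_bound w (`|u| ^+ 5) (fun x => x ^+ 5) hw5.
  rewrite -[(size w).+1]addn1 natrD mulrDl mul1r addrC normrX => h; exact: lerD.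
have ePhi : Phi [:: a, b, t, u & w] = (a + b + t + r0) ^+ 5 - a ^+ 5 - b ^+ 5 - t ^+ 5 - E0.
  rewrite /Phi /freq_sum !big_cons /r0 /E0; ring.
have eS : freq_sum [:: a, b, t, u & w] = a + (b + t + r0).
  rewrite /freq_sum !big_cons /r0; ring.
have hS0 : b + t + r0 != 0.
  apply: contra_neq h1; rewrite eS => ->; by rewrite addr0.
have hd1 : (1 : int) <= `|a + b| by rewrite -gtz0_ge1 normr_gt0.
have hS1 : (1 : int) <= `|b + t + r0| by rewrite -gtz0_ge1 normr_gt0.
pose A : R := a%:~R. pose B : R := b%:~R. pose T : R := t%:~R. pose U : R := u%:~R.
pose Rr : R := r0%:~R. pose EE : R := E0%:~R.
have cR : forall x y : int, x <= y -> (x%:~R : R) <= y%:~R by move=> x y; rewrite ler_int.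
have k1 : `|B| <= `|A| by rewrite /A /B -!intr_norm; exact: cR.
have k2 : `|T| <= `|B| by rewrite /T /B -!intr_norm; exact: cR.
have k3 : `|U| <= `|T| by rewrite /T /U -!intr_norm; exact: cR.
have em : m = (size w).+1%:R by rewrite /m epm.
have k4 : `|Rr| <= m * `|U|.
  have := cR _ _ hr0; rewrite rmorphM /= rmorph_nat !intr_norm em; exact.
have k5 : `|EE| <= m * `|U| ^+ 5.
  rewrite -normrX in hE0.
  have := cR _ _ hE0; rewrite rmorphM /= rmorph_nat !intr_norm rmorphXn normrX em; exact.
have k6 : 1 <= `|A + B|.
  have := cR _ _ hd1; rewrite intr_norm rmorphD /= rmorph1; exact.
have k7 : 1 <= `|B + T + Rr|.
  have := cR _ _ hS1; rewrite /B /T /Rr -!rmorphD intr_norm /= rmorph1; exact.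
have k8 : K * `|T| < `|A|.
  rewrite -(ltr_pM2l hK) mulrA mulfV ?mul1r in h3; last by rewrite gt_eqF.
  by rewrite /T /A -!intr_norm.
have k9 : K * (`|T| ^+ 4 * `|U|) < `|A| ^+ 4.
  rewrite -(ltr_pM2l hK) mulrA mulfV ?mul1r in h5; last by rewrite gt_eqF.
  rewrite rmorphM !rmorphXn /= !intr_norm in h5.
  by rewrite norm4 norm4.
have := @core _ A B T U Rr EE m K hm erefl k1 k2 k3 k4 k5 k6 k7 k8 k9.
rewrite -(ltr_pM2l hK) mulrA mulfV ?mul1r in h4; last by rewrite gt_eqF.
rewrite ePhi intr_norm castPhi rmorphXn in h4.
rewrite norm4 /A /B /T /Rr /EE.
move: h4; set Q := `|_|; move=> h4 h6.
have := lt_le_trans h4 h6. by rewrite ltxx.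
Qed.
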